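(* Let $A \subset \mathbb{Z}^d$ be a finite set whose convex hull $\Delta_A$ is a $d$-dimensional simplex with vertices $v_1, \ldots, v_{d+1}$. Let $\widetilde{v} = (v,1) \in \mathbb{Z}^{d+1}$ denote the lift of $v \in \mathbb{Z}^d$, and let $\mathcal{C}_A = \{\sum_{a \in A} n_a \widetilde{a} : n_a \in \mathbb{N}\}$. Call $(g,H) \in \mathcal{C}_A$ (with $g \in \mathbb{Z}^d$, $H \in \mathbb{N}$) a minimal element of $\mathcal{C}_A$ if $(g,H) - \widetilde{v}_i \notin \mathcal{C}_A$ for every $i = 1, \ldots, d+1$, and enumerate the minimal elements of $\mathcal{C}_A$ as $(g_1,H_1), (g_2,H_2), \ldots$. Then for every $h \in \mathbb{N}$, \[ hA = \bigcup_j \Big\{ g_j + \sum_{i=1}^{d+1} k_i v_i : k_i \in \mathbb{N} \text{ for all } i, \ \sum_{i=1}^{d+1} k_i = h - H_j \Big\}. \]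
   Context: $\mathbb{N} = \{0,1,2,\ldots\}$. For $h \in \mathbb{N}$, $hA = \{a_1 + \cdots + a_h : a_i \in A\}$, with $0A = \{0\}$. *)

(* Defs.v *)
From HB Require Import structures.
From mathcomp Require Import all_boot all_order all_algebra.
Set Implicit Arguments. Unset Strict Implicit. Unset Printing Implicit Defensive.
Import Order.TTheory GRing.Theory Num.Theory.
Local Open Scope ring_scope.

(* Points of Z^d are row vectors 'rV[int]_d; a finite set A is a seq (duplicates irrelevant). *)

Definition ratv {d : nat} (x : 'rV[int]_d) : 'rV[rat]_d := map_mx (fun z : int => z%:~R) x.

Definition in_conv {d : nat} (S : seq 'rV[rat]_d) (x : 'rV[rat]_d) : Prop :=
  exists l : 'rV[rat]_d -> rat,
    (forall s, 0 <= l s) /\ \sum_(s <- undup S) l s = 1 /\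
    x = \sum_(s <- undup S) l s *: s.

Definition aff_indep {d n : nat} (v : 'I_n -> 'rV[rat]_d) : Prop :=
  forall l : 'I_n -> rat,
    \sum_i l i = 0 -> \sum_i l i *: v i = 0 -> forall i, l i = 0.

Definition sumset {d : nat} (h : nat) (A : seq 'rV[int]_d) (x : 'rV[int]_d) : Prop :=
  exists f : 'I_h -> 'rV[int]_d, (forall i, f i \in A) /\ x = \sum_i f i.

(* (g,H) in C_A = { sum_a n_a (a,1) : n_a in N } ⊂ Z^(d+1) *)
Definition in_cone {d : nat} (A : seq 'rV[int]_d) (g : 'rV[int]_d) (H : int) : Prop :=
  exists n : 'rV[int]_d -> nat,
    g = \sum_(a <- undup A) a *+ n a /\ H = (\sum_(a <- undup A) n a)%:Z.

Definition minimal_elt {d : nat} (A : seq 'rV[int]_d) (v : 'I_d.+1 -> 'rV[int]_d)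
    (g : 'rV[int]_d) (H : int) : Prop :=
  in_cone A g H /\ forall i, ~ in_cone A (g - v i) (H - 1).

(* Main.v *)
Require Import Defs.
From HB Require Import structures.
From mathcomp Require Import all_boot all_order all_algebra.
Import Order.TTheory GRing.Theory Num.Theory.
Local Open Scope ring_scope.
Set Implicit Arguments. Unset Strict Implicit.
From Stdlib Require Import ClassicalEpsilon.
Lemma sumset0 d (A : seq 'rV[int]_d) : sumset 0 A 0.
Proof. exists (fun _ => 0); split; [by case | by rewrite big_ord0]. Qed.

Lemma sumset1 d (A : seq 'rV[int]_d) a : a \in A -> sumset 1 A a.
Proof. move=> aA; exists (fun _ => a); split=> //; by rewrite big_ord1. Qed.

Lemma sumsetD d (A : seq 'rV[int]_d) m k x y :
  sumset m A x -> sumset k A y -> sumset (m + k) A (x + y).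
Proof.
case=> f [fA ->] [g [gA ->]].
exists (fun i => match split i with inl j => f j | inr j => g j end); split.
  by move=> i; case: split.
rewrite big_split_ord /=; congr (_ + _); apply: eq_bigr => i _.
  by rewrite -[lshift _ _]/(unsplit (inl i)) unsplitK.
by rewrite -[rshift _ _]/(unsplit (inr i)) unsplitK.
Qed.

Lemma sumsetMn d (A : seq 'rV[int]_d) a k : a \in A -> sumset k A (a *+ k).
Proof.
move=> aA; elim: k => [|k IH]; first by rewrite mulr0n; apply: sumset0.
by rewrite mulrSr -addn1; apply: sumsetD => //; apply: sumset1.
Qed.

Lemma sumset_big d (A : seq 'rV[int]_d) (I : Type) (r : seq I) (P : pred I)
  (F : I -> 'rV[int]_d) (k : I -> nat) :
  (forall i, P i -> F i \in A) ->
  sumset (\sum_(i <- r | P i) k i)%N A (\sum_(i <- r | P i) F i *+ k i).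
Proof.
move=> HF; apply: (big_rec2 (fun n x => sumset n A x)); first exact: sumset0.
by move=> i y1 y2 Pi H; apply: sumsetD => //; apply: sumsetMn; apply: HF.
Qed.

Lemma cone_sumset d (A : seq 'rV[int]_d) g H :
  in_cone A g H -> exists m : nat, H = m%:Z /\ sumset m A g.
Proof.
case=> n [-> ->]; eexists; split; first reflexivity.
rewrite big_seq_cond [X in sumset _ _ X]big_seq_cond.
by apply: sumset_big => i /andP[]; rewrite mem_undup.
Qed.

Lemma sumset_cone d (A : seq 'rV[int]_d) m g :
  sumset m A g -> in_cone A g m.
Proof.
elim: m g => [|m IH] g [f [fA ->]].
  by rewrite big_ord0; exists (fun _ => 0%N); split; rewrite ?big1.
have [n [Hg Hm]] : in_cone A (\sum_(i < m) f (widen_ord (leqnSn m) i)) m.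
  by apply: IH; eexists; split; last reflexivity.
set b := f ord_max.
have bA : b \in undup A by rewrite mem_undup; apply: fA.
exists (fun a => n a + (a == b))%N; split.
  rewrite big_ord_recr /= Hg.
  under eq_bigr do rewrite mulrnDr.
  rewrite big_split /=; congr (_ + _).
  rewrite (bigD1_seq b) ?undup_uniq //= eqxx mulr1n big1 ?addr0 //.
  by move=> a /negPf ->.
rewrite big_split /= PoszD -Hm.
rewrite (bigD1_seq b) ?undup_uniq //= eqxx big1 ?addn0; last by move=> a /negPf ->.
by rewrite -PoszD addn1.
Qed.
Lemma descent d (A : seq 'rV[int]_d) (v : 'I_d.+1 -> 'rV[int]_d) (m : nat) x :
  in_cone A x m -> exists g H, minimal_elt A v g H /\
    exists k : 'I_d.+1 -> nat, (\sum_i k i)%:Z = m%:Z - H /\ x = g + \sum_i v i *+ k i.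
Proof.
elim: m {-2}m (leqnn m) x => [|N IH] m hm x hx.
  exists x, m%:Z; split; last first.
    exists (fun _ => 0%N); rewrite big1 ?subrr //; split=> //.
    by rewrite big1 ?addr0.
  split=> // i /cone_sumset [m' [Hm _]].
  by move: hm Hm; rewrite leqn0 => /eqP ->; rewrite sub0r.
have [hmin|] := classic (forall i, ~ in_cone A (x - v i) (m%:Z - 1)).
  exists x, m%:Z; split; first by split.
  exists (fun _ => 0%N); rewrite big1 ?subrr //; split=> //.
  by rewrite big1 ?addr0.
move=> /not_all_not_ex [i hi].
have [m' [Hm' hs]] := cone_sumset hi.
have hm0 : m = m'.+1.
  by apply/eqP; rewrite -eqz_nat -addn1 PoszD -Hm' subrK.
have hi' : in_cone A (x - v i) m' by rewrite -Hm'.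
have [|g [H [hmin [k [hk hx']]]]] := IH m' _ _ hi'.
  by move: hm; rewrite hm0.
exists g, H; split=> //.
exists (fun j => k j + (j == i))%N; split.
  rewrite big_split /= PoszD hk (bigD1 i) //= eqxx big1 ?addn0; last by move=> j /negPf ->.
  by rewrite hm0 -addn1 PoszD addrAC.
under eq_bigr do rewrite mulrnDr.
rewrite big_split /= addrA -hx'.
rewrite (bigD1 i) //= eqxx mulr1n big1 ?addr0 ?subrK //.
by move=> j /negPf ->.
Qed.
Lemma sum_deltaZ (R : pzRingType) (V : lmodType R) n (i : 'I_n) (F : 'I_n -> V) :
  \sum_t ((t == i)%:R : R) *: F t = F i.
Proof.
rewrite (bigD1 i) //= eqxx scale1r big1 ?addr0 //.
by move=> t /negPf ->; rewrite scale0r.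
Qed.

Lemma sum_delta (R : pzRingType) n (i : 'I_n) :
  \sum_t ((t == i)%:R : R) = 1.
Proof.
rewrite (bigD1 i) //= eqxx big1 ?addr0 //.
by move=> t /negPf ->.
Qed.

Lemma ratv_inj d : injective (@ratv d).
Proof.
move=> a b e; apply/matrixP => p q.
by have := congr1 (fun M : 'M[rat]_(1,d) => M p q) e; rewrite !mxE => /intr_inj.
Qed.

Lemma vert_in d (A : seq 'rV[int]_d) (v : 'I_d.+1 -> 'rV[int]_d) :
  aff_indep (fun i => ratv (v i)) ->
  (forall x : 'rV[rat]_d,
      in_conv (map ratv A) x <-> in_conv [seq ratv (v i) | i <- enum 'I_d.+1] x) ->
  forall j, v j \in A.
Proof.
move=> hai hconv j.
set w := fun i => ratv (v i).
have winj : injective w.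
  move=> i k e; case: (eqVneq i k) => // ne; exfalso.
  have : ((i==i)%:R - (i==k)%:R : rat) = 0.
    apply: (hai (fun t => (t==i)%:R - (t==k)%:R)).
      by rewrite sumrB !sum_delta subrr.
    under eq_bigr do rewrite scalerBl.
    by rewrite sumrB !sum_deltaZ; apply/eqP; rewrite subr_eq0; apply/eqP.
  by rewrite eqxx (negPf ne) subr0 => /eqP; rewrite oner_eq0.
set VS := [seq w i | i <- enum 'I_d.+1].
have VSu : undup VS = VS by rewrite undup_id // map_inj_uniq ?enum_uniq.
have sumVS : forall (T : nmodType) (F : 'rV[rat]_d -> T),
    \sum_(s <- undup VS) F s = \sum_i F (w i).
  by move=> T F; rewrite VSu big_map big_enum.
set U := undup (map ratv A).
have Uu : uniq U by apply: undup_uniq.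
have [l [l0 [l1 lx]]] : in_conv (map ratv A) (w j).
  apply/hconv; exists (fun s => (s == w j)%:R); split; first by move=> s; apply: ler0n.
  rewrite !sumVS; under eq_bigr do rewrite (inj_eq winj).
  split; first by apply: sum_delta.
  under eq_bigr do rewrite (inj_eq winj).
  by rewrite sum_deltaZ.
have : forall s, exists mu : 'I_d.+1 -> rat, (forall i, 0 <= mu i) /\
   (s \in U -> \sum_i mu i = 1 /\ s = \sum_i mu i *: w i).
  move=> s; case: (boolP (s \in U)) => sU; last by exists (fun _ => 0).
  have [m [m0 [m1 mx]]] : in_conv VS s.
    apply/hconv; exists (fun t => (t == s)%:R); split; first by move=> t; apply: ler0n.
    rewrite -/U !(bigD1_seq s) //= eqxx scale1r !big1 ?addr0 //.
      by move=> t /negPf ->; rewrite scale0r.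
    by move=> t /negPf ->.
  by rewrite !sumVS in m1 mx; exists (fun i => m (w i)).
move=> /choice [mu hmu].
set lam := fun i => \sum_(s <- U) l s * mu s i.
have hlam : forall i, lam i = (i == j)%:R.
  move=> i; apply/eqP; rewrite -subr_eq0; apply/eqP.
  apply: (hai (fun i => lam i - (i == j)%:R)).
    rewrite sumrB sum_delta /lam exchange_big /=.
    rewrite big_seq (eq_bigr (fun s => l s)) -?big_seq ?l1 ?subrr //.
    by move=> s sU; rewrite -mulr_sumr; have [_ /(_ sU) [-> _]] := hmu s; rewrite ?mulr1.
  under eq_bigr do rewrite scalerBl.
  rewrite sumrB sum_deltaZ /lam.
  rewrite (eq_bigr (fun i => \sum_(s <- U) (l s * mu s i) *: w i)); last first.
    by move=> i' _; rewrite scaler_suml.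
  have lx2 : ratv (v j) = _ := lx.
  rewrite exchange_big /= lx2 big_seq [X in _ - X]big_seq.
  rewrite -sumrB big1 // => s sU.
  have [_ /(_ sU) [_ hs]] := hmu s.
  rewrite [X in _ - l s *: X]hs scaler_sumr -sumrB big1 // => i' _.
  by rewrite scalerA subrr.
have [s0 s0U ls0] : exists2 s, s \in U & l s != 0.
  case: (boolP (has (fun s => l s != 0) U)) => [/hasP//|/hasPn H0].
  move: l1; rewrite big_seq big1 => [/eqP|s sU]; first by rewrite eq_sym oner_eq0.
  by have := H0 s sU; rewrite negbK => /eqP.
have [mu0 /(_ s0U) [mu1 mux]] := hmu s0.
have mu0i : forall i, i != j -> mu s0 i = 0.
  move=> i ne; have := hlam i; rewrite (negPf ne) /lam (bigD1_seq s0) //=.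
  move/eqP; rewrite paddr_eq0 ?mulr_ge0 ?sumr_ge0 //.
  - by case/andP => /eqP/eqP; rewrite mulf_eq0 (negPf ls0) /= => /eqP.
  - by move=> s _; rewrite mulr_ge0 // (hmu s).1.
have mux' : s0 = mu s0 j *: w j.
  rewrite {1}mux (bigD1 j) //= big1 ?addr0 // => i ne.
  by rewrite mu0i ?scale0r.
have muj : mu s0 j = 1.
  move: mu1; rewrite (bigD1 j) //= big1 ?addr0 // => i ne.
rewrite muj scale1r in mux'.
move: s0U; rewrite mem_undup => /mapP [a aA ea].
by have <- : a = v j by apply: ratv_inj; rewrite -ea mux'.
Qed.

Theorem proposition4p1 (d : nat) (A : seq 'rV[int]_d) (v : 'I_d.+1 -> 'rV[int]_d) :
  (* conv(A) is the d-simplex with vertices v_1, ..., v_{d+1} *)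
  aff_indep (fun i => ratv (v i)) ->
  (forall x : 'rV[rat]_d,
      in_conv (map ratv A) x <-> in_conv [seq ratv (v i) | i <- enum 'I_d.+1] x) ->
  forall (h : nat) (x : 'rV[int]_d),
    sumset h A x <->
    exists (g : 'rV[int]_d) (H : int), minimal_elt A v g H /\
      exists k : 'I_d.+1 -> nat,
        (\sum_i k i)%:Z = h%:Z - H /\ x = g + \sum_i v i *+ k i.
Proof.
move=> hai hconv h x; split.
  by move/sumset_cone => hc; apply: descent hc.
case=> g [H [[hc hmin] [k [hk ->]]]].
have [m [Hm hs]] := cone_sumset hc.
have hv := vert_in hai hconv.
have := sumsetD hs (@sumset_big d A _ (index_enum 'I_d.+1) predT v k (fun i _ => hv i)).
have -> // : h = (m + \sum_i k i)%N.
apply/eqP; rewrite -eqz_nat PoszD hk Hm addrC subrK //.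
Qed.
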